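(* Let $f:M^2\to\mathbb{R}^3$ be a surface in curvature line coordinates $(x,y)$ with metric $H_1^2dx^2+H_2^2dy^2$ and nonvanishing principal curvatures $\kappa_1,\kappa_2$, let $\varepsilon\in\{0,\pm1\}$, and let $\hat f$ be an associated surface given by $d\hat f=h\,\partial_xf\,dx+l\,\partial_yf\,dy$ with $(h-l)^2=\frac{1}{H_1^2}+\frac{\varepsilon}{H_2^2}$. Let $f^\star$ be the corresponding dual surface, $df^\star=\big(-h^2+\frac1{H_1^2}\big)\partial_xf\,dx+\big(-l^2+\frac{\varepsilon}{H_2^2}\big)\partial_yf\,dy$. Then, with principal curvatures of $\hat f,f^\star$ taken with respect to the normal of $f$, i.e. $\frac1{\hat\kappa_1}=\frac h{\kappa_1}$, $\frac1{\hat\kappa_2}=\frac l{\kappa_2}$, $\frac1{\kappa_1^\star}=\frac{-h^2+1/H_1^2}{\kappa_1}$, $\frac1{\kappa_2^\star}=\frac{-l^2+\varepsilon/H_2^2}{\kappa_2}$, $$\Big(\frac1{\kappa_1}-\frac1{\kappa_2}\Big)\Big(\frac1{\kappa_1^\star}-\frac1{\kappa_2^\star}\Big)=\frac{1}{\kappa_1^2H_1^2}+\frac{\varepsilon}{\kappa_2^2H_2^2}-\Big(\frac1{\hat\kappa_1}-\frac1{\hat\kappa_2}\Big)^2 .$$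
   Context: Surfaces are parametrized by curvature line coordinates (orthogonal, conjugate); $\kappa_1,\kappa_2$ are the principal curvatures along $x$- and $y$-lines. A Combescure transform $\hat f$ of $f$ is a surface with $d\hat f=h\,\partial_xf\,dx+l\,\partial_yf\,dy$; its principal curvatures in the corresponding directions are $\kappa_1/h$ and $\kappa_2/l$ (up to the common sign given by normal orientation). $f$ is a G-surface with associated surface $\hat f$ if $cH_1^2H_2^2(\kappa_1/\hat\kappa_1-\kappa_2/\hat\kappa_2)^2=H_2^2+\varepsilon H_1^2$ for some $c\ne0$, $\varepsilon\in\{0,\pm1\}$; the hypothesis $(h-l)^2=1/H_1^2+\varepsilon/H_2^2$ is this condition with $c=1$. The 1-form defining $f^\star$ is closed under this hypothesis. *)

(* Defs.v *)
From mathcomp Require Import all_boot all_order all_algebra.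
Set Implicit Arguments. Unset Strict Implicit. Unset Printing Implicit Defensive.
Import Order.TTheory GRing.Theory Num.Theory.
Local Open Scope ring_scope.

Definition inv_khat1 {R : fieldType} {M : Type} (k1 h : M -> R) (p : M) : R :=
  h p / k1 p.
Definition inv_khat2 {R : fieldType} {M : Type} (k2 l : M -> R) (p : M) : R :=
  l p / k2 p.

Definition inv_kstar1 {R : fieldType} {M : Type} (H1 k1 h : M -> R) (p : M) : R :=
  (- h p ^+ 2 + (H1 p ^+ 2)^-1) / k1 p.
Definition inv_kstar2 {R : fieldType} {M : Type} (eps : R) (H2 k2 l : M -> R) (p : M) : R :=
  (- l p ^+ 2 + eps / H2 p ^+ 2) / k2 p.

(* Main.v *)
Require Import Defs.
From mathcomp Require Import all_boot all_order all_algebra.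
From mathcomp Require Import ring lra.
Import Order.TTheory GRing.Theory Num.Theory.
Local Open Scope ring_scope.

Theorem lemma3p8 (R : realFieldType) (M : Type) (eps : R)
  (H1 H2 k1 k2 h l : M -> R) :
  (eps = 0 \/ eps = 1 \/ eps = -1) ->
  (forall p, H1 p != 0) -> (forall p, H2 p != 0) ->
  (forall p, k1 p != 0) -> (forall p, k2 p != 0) ->
  (forall p, (h p - l p) ^+ 2 = (H1 p ^+ 2)^-1 + eps / H2 p ^+ 2) ->
  forall p,
    ((k1 p)^-1 - (k2 p)^-1) *
      (inv_kstar1 H1 k1 h p - inv_kstar2 eps H2 k2 l p)
    = (k1 p ^+ 2 * H1 p ^+ 2)^-1 + eps / (k2 p ^+ 2 * H2 p ^+ 2)
      - (inv_khat1 k1 h p - inv_khat2 k2 l p) ^+ 2.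
Proof.
move=> _ nH1 nH2 nk1 nk2 Hhl p.
rewrite /inv_kstar1 /inv_kstar2 /inv_khat1 /inv_khat2.
have E : eps = ((h p - l p) ^+ 2 - (H1 p ^+ 2)^-1) * H2 p ^+ 2.
  by rewrite Hhl addrC addKr mulfVK // expf_neq0.
move: (nH1 p) (nH2 p) (nk1 p) (nk2 p) => a b c d.
rewrite E; field.
by rewrite c d a b.
Qed.
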